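(* Let $1\le n\le N-1$ and $Z_n=\frac1n\sum_{t=1}^n (X_t-\mu)$. For every $\lambda>0$, \[ \log \mathbb E \exp(\lambda n Z_n)\le \frac{(b-a)^2}{8}\,\lambda^2 (n+1)\Big(1-\frac nN\Big). \]
   Context: Let $N\ge 2$ and let $\mathcal X=(x_1,\dots,x_N)$ be a finite population of real numbers (repetitions allowed). Let $(X_1,\dots,X_N)=(x_{\pi(1)},\dots,x_{\pi(N)})$, where $\pi$ is a uniformly random permutation of $\{1,\dots,N\}$. For $n\le N$, $(X_1,\dots,X_n)$ is therefore a sample of size $n$ drawn uniformly without replacement from $\mathcal X$. Let $\mu=\frac1N\sum_{i=1}^N x_i$, $a=\min_i x_i$ and $b=\max_i x_i$. *)

(* Defs.v *)
From HB Require Import structures.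
From mathcomp Require Import all_boot all_fingroup.
From Stdlib Require Import Reals.
Set Implicit Arguments.
Unset Strict Implicit.
Unset Printing Implicit Defensive.
Open Scope R_scope.

Definition pop_mean (N : nat) (x : 'I_N -> R) : R :=
  (\big[Rplus/0]_(i < N) x i) / INR N.

(* n * Z_n = sum_{t=1}^n (X_t - mu), with X_t = x_{pi(t)}; indices shifted to 0..n-1 *)
Definition nZ (N n : nat) (x : 'I_N -> R) (s : 'S_N) : R :=
  \big[Rplus/0]_(t < N | ltn t n) (x (s t) - pop_mean x).

Definition Eperm (N : nat) (f : 'S_N -> R) : R :=
  (\big[Rplus/0]_(s : 'S_N) f s) / INR #|{perm 'I_N}|.

(* Main.v *)
Require Import Defs.
From HB Require Import structures.
From mathcomp Require Import all_boot all_fingroup.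
From Stdlib Require Import Reals Lra Psatz.
From Coquelicot Require Coquelicot.
From mathcomp Require Import zify.
Open Scope R_scope.

Module An.
Import Coquelicot.Coquelicot.

Lemma D_pos p u : 0 <= p <= 1 -> 0 < 1 - p + p * exp u.
Proof.
  intros Hp. pose proof (exp_pos u).
  destruct (Req_dec p 1). subst; lra. nra.
Qed.

Lemma exp_le x y : x <= y -> exp x <= exp y.
Proof. intros [H|H]. left; apply exp_increasing; auto. subst; lra. Qed.

Lemma hoef_core p u : 0 <= p <= 1 -> 1 - p + p * exp u <= exp (p * u + u ^ 2 / 8).
Proof.
  intros Hp.
  set (D := fun u => 1 - p + p * exp u).
  set (g := fun u => p * u + u ^ 2 / 8 - ln (D u)).
  set (g1 := fun u => p + u / 4 - p * exp u / D u).
  set (g2 := fun u => 1/4 - p * exp u * (1 - p) / (D u)^2).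
  assert (HD : forall u, 0 < D u) by (intros; apply D_pos; auto).
  assert (Hg : forall c, derivable_pt_lim g c (g1 c)).
  { intros c. apply is_derive_Reals. unfold g, g1, D.
    pose proof (HD c). unfold D in H.
    auto_derive. lra. field. lra. }
  assert (Hg1 : forall c, derivable_pt_lim g1 c (g2 c)).
  { intros c. apply is_derive_Reals. unfold g1, g2, D.
    pose proof (HD c). unfold D in H.
    auto_derive. lra. field. lra. }
  assert (Hg2 : forall c, 0 <= g2 c).
  { intros c. unfold g2. pose proof (HD c). 
    pose proof (exp_pos c).
    assert (p * exp c * (1 - p) <= (D c) ^ 2 / 4).
    { unfold D. pose proof (pow2_ge_0 (1 - p - p * exp c)). nra. }
    assert (p * exp c * (1 - p) / D c ^ 2 <= 1/4).
    { apply (Rmult_le_reg_r (D c ^ 2)). nra.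
      unfold Rdiv. rewrite Rmult_assoc Rinv_l. lra. apply pow_nonzero; lra. }
    lra. }
  assert (H0 : g1 0 = 0).
  { unfold g1, D. rewrite exp_0. field. lra. }
  assert (Hg0 : g 0 = 0).
  { unfold g, D. rewrite exp_0. replace (1 - p + p * 1) with 1 by ring. rewrite ln_1. simpl. lra. }
  assert (Hge : 0 <= g u).
  { destruct (Rtotal_order u 0) as [Hu|[Hu|Hu]].
    - destruct (MVT_cor2 g g1 u 0 Hu (fun c _ => Hg c)) as [c [Hc1 Hc2]].
      destruct (MVT_cor2 g1 g2 c 0 (proj2 Hc2) (fun c _ => Hg1 c)) as [d [Hd1 Hd2]].
      pose proof (Hg2 d). assert (g1 c <= 0) by nra. nra.
    - subst; lra.
    - destruct (MVT_cor2 g g1 0 u Hu (fun c _ => Hg c)) as [c [Hc1 Hc2]].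
      destruct (MVT_cor2 g1 g2 0 c (proj1 Hc2) (fun c _ => Hg1 c)) as [d [Hd1 Hd2]].
      pose proof (Hg2 d). assert (0 <= g1 c) by nra. nra. }
  unfold g in Hge. fold (D u).
  rewrite -(exp_ln (D u)); last by auto.
  apply exp_le. lra.
Qed.
End An.
Lemma Rplus_assoc' : associative Rplus. Proof. move=> *; ring. Qed.
HB.instance Definition _ := Monoid.isComLaw.Build R 0 Rplus Rplus_assoc' Rplus_comm Rplus_0_l.

Section Sums.
Variable (I : finType).
Implicit Types (P : pred I) (F G : I -> R).

Lemma sumR_le P F G : (forall i, P i -> F i <= G i) ->
  \big[Rplus/0]_(i | P i) F i <= \big[Rplus/0]_(i | P i) G i.
Proof.
  move=> H; apply: (big_ind2 (fun u v => u <= v)); [lra| move=> *; lra | exact: H].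
Qed.

Lemma sumR_ge0 P F : (forall i, P i -> 0 <= F i) -> 0 <= \big[Rplus/0]_(i | P i) F i.
Proof.
  move=> H; apply: (big_ind (fun u => 0 <= u)); [lra| move=> *; lra | exact: H].
Qed.

Lemma sumR_scal P F c : c * \big[Rplus/0]_(i | P i) F i = \big[Rplus/0]_(i | P i) (c * F i).
Proof.
  apply: (big_ind2 (fun u v => c * u = v)); [ring| move=> x1 x2 y1 y2 <- <-; ring | by []].
Qed.

Lemma sumR_add P F G : \big[Rplus/0]_(i | P i) (F i + G i) =
  \big[Rplus/0]_(i | P i) F i + \big[Rplus/0]_(i | P i) G i.
Proof. exact: big_split. Qed.

Lemma sumR_gt0 P F i0 : P i0 -> (forall i, P i -> 0 <= F i) -> 0 < F i0 ->
  0 < \big[Rplus/0]_(i | P i) F i.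
Proof.
  move=> Pi0 H H0; rewrite (bigD1 i0) //=.
  have : 0 <= \big[Rplus/0]_(i | P i && (i != i0)) F i.
    by apply: sumR_ge0 => i /andP [Pi _]; apply: H.
  lra.
Qed.
End Sums.

Lemma iter_plus m c : iter m (Rplus c) 0 = INR m * c.
Proof. elim: m => [|m IH]; first by rewrite /=; ring. rewrite iterS IH S_INR; ring. Qed.

Lemma sum_const (T : finType) c : \big[Rplus/0]_(i : T) c = INR #|T| * c.
Proof. by rewrite big_const iter_plus. Qed.

Lemma sum_ord_lt (N m : nat) (c : R) : leq m N -> \big[Rplus/0]_(j < N | ltn j m) c = INR m * c.
Proof.
  elim: m => [|m IH] Hm.
    rewrite big_pred0 /=; [ring| by move=> j].
  have Hm' : ltn m N by [].
  rewrite S_INR (bigD1 (Ordinal Hm')) //.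
  rewrite (eq_bigl (fun j : 'I_N => ltn j m)); last first.
    move=> j /=. rewrite ltnS -val_eqE /= ltn_neqAle. by rewrite andbC.
  rewrite /= IH; last exact: ltnW. ring. by rewrite /= ltnS.
Qed.

Lemma exp_le' x y : x <= y -> exp x <= exp y.
Proof. move=> [H|H]. left; exact: exp_increasing. subst; lra. Qed.

Lemma two_point A B s : A <= 0 <= B -> A < B ->
  (B * exp (s * A) - A * exp (s * B)) / (B - A) <= exp (s ^ 2 * (B - A) ^ 2 / 8).
Proof.
  move=> HAB lAB.
  set p := - A / (B - A). set u := s * (B - A).
  have Hp : 0 <= p <= 1.
    rewrite /p; split.
    - apply: Rmult_le_pos; first lra. left; apply: Rinv_0_lt_compat; lra.
    - apply: (Rmult_le_reg_r (B - A)); first lra.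
      rewrite /Rdiv Rmult_assoc Rinv_l; lra.
  have E1 : exp (s * B) = exp (s * A) * exp u.
    by rewrite -exp_plus /u; f_equal; ring.
  have E2 : (B * exp (s * A) - A * exp (s * B)) / (B - A) = exp (s * A) * (1 - p + p * exp u).
    rewrite E1 /p; field; lra.
  rewrite E2.
  apply: (Rle_trans _ (exp (s * A) * exp (p * u + u ^ 2 / 8))).
    apply: Rmult_le_compat_l; first by left; apply: exp_pos.
    exact: An.hoef_core.
  rewrite -exp_plus; apply: Req_le; f_equal; rewrite /p /u; field; lra.
Qed.

Lemma cvx A B s y : A <= y <= B ->
  exp (s * y) * (B - A) <= (B - y) * exp (s * A) + (y - A) * exp (s * B).
Proof.
  move=> Hy.
  set E := exp (s * y).
  have HE : 0 < E by apply: exp_pos.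
  have hA : E * (1 + (s * A - s * y)) <= exp (s * A).
    have -> : exp (s * A) = E * exp (s * A - s * y) by rewrite /E -exp_plus; f_equal; ring.
    apply: Rmult_le_compat_l; [lra | exact: exp_ineq1_le].
  have hB : E * (1 + (s * B - s * y)) <= exp (s * B).
    have -> : exp (s * B) = E * exp (s * B - s * y) by rewrite /E -exp_plus; f_equal; ring.
    apply: Rmult_le_compat_l; [lra | exact: exp_ineq1_le].
  have h1 := Rmult_le_compat_l (B - y) _ _ ltac:(lra) hA.
  have h2 := Rmult_le_compat_l (y - A) _ _ ltac:(lra) hB.
  nra.
Qed.

Lemma sign_bounds (I : finType) (P : pred I) (y : I -> R) A B i0 : P i0 ->
  (forall i, P i -> A <= y i <= B) -> \big[Rplus/0]_(i | P i) y i = 0 -> A <= 0 <= B.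
Proof.
  move=> Pi0 H Hs; split.
  - apply: Rnot_lt_le => hA.
    have : 0 < \big[Rplus/0]_(i | P i) y i.
      apply: (@sumR_gt0 I P _ i0 Pi0) => [i Pi|]; [have := H _ Pi | have := H _ Pi0]; lra.
    lra.
  - apply: Rnot_lt_le => hB.
    have : 0 < \big[Rplus/0]_(i | P i) (- y i).
      apply: (@sumR_gt0 I P _ i0 Pi0) => [i Pi|]; [have := H _ Pi | have := H _ Pi0]; lra.
    have -> : \big[Rplus/0]_(i | P i) (- y i) = (-1) * \big[Rplus/0]_(i | P i) y i.
      rewrite sumR_scal; apply: eq_bigr => i _; ring.
    lra.
Qed.

Lemma hoef_disc (I : finType) (P : pred I) (y : I -> R) (A B s : R) :
  A <= 0 <= B -> (forall i, P i -> A <= y i <= B) -> \big[Rplus/0]_(i | P i) y i = 0 ->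
  \big[Rplus/0]_(i | P i) exp (s * y i) <=
  (\big[Rplus/0]_(i | P i) 1) * exp (s ^ 2 * (B - A) ^ 2 / 8).
Proof.
  move=> HAB Hy Hs.
  have Hc : 0 <= \big[Rplus/0]_(i | P i) 1 by apply: sumR_ge0 => *; lra.
  case: (Req_dec A B) => [eAB|nAB].
    rewrite Rmult_comm sumR_scal; apply: sumR_le => i Pi.
    have := Hy _ Pi => Hi.
    have -> : y i = 0 by lra.
    have -> : s ^ 2 * (B - A) ^ 2 / 8 = 0.
      rewrite eAB. field.
    rewrite Rmult_0_r exp_0; lra.
  have lAB : A < B by lra.
  set al := (B * exp (s * A) - A * exp (s * B)) / (B - A).
  set be := (exp (s * B) - exp (s * A)) / (B - A).
  apply: (Rle_trans _ (\big[Rplus/0]_(i | P i) (al * 1 + be * y i))).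
    apply: sumR_le => i Pi.
    have h := cvx A B s (y i) (Hy _ Pi).
    apply: (Rmult_le_reg_r (B - A)); first lra.
    apply: (Rle_trans _ _ _ h); apply: Req_le; rewrite /al /be; field; lra.
  rewrite sumR_add -!sumR_scal Hs Rmult_0_r Rplus_0_r Rmult_comm.
  apply: Rmult_le_compat_l => //.
  exact: two_point.
Qed.

Definition Sk (N : nat) (x : 'I_N -> R) (k : nat) (s : 'S_N) : R :=
  \big[Rplus/0]_(t < N | ltn t k) (x (s t) - pop_mean x).
Arguments Sk {N}.

Definition Ek (N n : nat) (x : 'I_N -> R) (lambda : R) (k : nat) : R :=
  \big[Rplus/0]_(s : 'S_N) exp (lambda * INR n / INR k * Sk x k s).
Arguments Ek {N}.

Lemma Sk_swap (N : nat) (x : 'I_N -> R) (k : nat) (kk j : 'I_N) (s : 'S_N) :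
  nat_of_ord kk = k -> ltn j k.+1 ->
  Sk x k (tperm j kk * s)%g = Sk x k.+1 s - (x (s j) - pop_mean x).
Proof.
  move=> ekk hj; rewrite /Sk.
  under eq_bigr => t _ do rewrite permM.
  rewrite (reindex_inj (inv_inj (tpermK j kk))) /=.
  under eq_bigr => t _ do rewrite tpermK.
  rewrite [X in _ = X - _](bigD1 j) //=.
  rewrite (eq_bigl (fun t : 'I_N => leq t.+1 k.+1 && (t != j))); first by rewrite [X in _ = X - _]Rplus_comm /Rminus Rplus_assoc Rplus_opp_r Rplus_0_r.
  move=> t /=.
  case: tpermP => [->|->|ne1 ne2].
  - rewrite ekk ltnn. case: eqP => // _; by rewrite andbF.
  - case: (eqVneq j kk) => [ejk|njk].
      by rewrite ejk ekk ltnn andbF.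
    rewrite ekk ltnSn /=.
    have hjk : nat_of_ord j != k by rewrite -ekk; exact: njk.
    by rewrite ltn_neqAle hjk -ltnS.
  - have htk : nat_of_ord t != k by rewrite -ekk; apply/eqP => h; apply: ne2; exact: val_inj h.
    have ne1' : t != j by apply/eqP.
    by rewrite ne1' andbT ltnS ltn_neqAle htk.
Qed.

Lemma INR_pos_lt (k : nat) : (0 < k)%coq_nat -> 0 < INR k.
Proof. move=> h; exact: lt_0_INR. Qed.

Lemma step (N n : nat) (x : 'I_N -> R) (a b lambda : R) (k : nat) :
  (forall i, a <= x i <= b) -> leq 1 n -> leq n k -> ltn k N ->
  Ek n x lambda k <= Ek n x lambda k.+1 * exp (lambda ^ 2 * (b - a) ^ 2 / 8 * (INR n ^ 2 / INR k ^ 2)).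
Proof.
  move=> hx hn hnk hkN.
  set kk := Ordinal hkN.
  set c' := exp (lambda ^ 2 * (b - a) ^ 2 / 8 * (INR n ^ 2 / INR k ^ 2)).
  have Hk : 0 < INR k by apply: lt_0_INR; apply/ltP; exact: leq_trans hn hnk.
  have Hk1 : INR k.+1 = INR k + 1 by rewrite S_INR.
  set mu := pop_mean x.
  set P := fun j : 'I_N => ltn j k.+1.
  have key : forall s : 'S_N,
    \big[Rplus/0]_(j < N | P j) exp (lambda * INR n / INR k * Sk x k (tperm j kk * s)%g)
    <= INR k.+1 * (exp (lambda * INR n / INR k.+1 * Sk x k.+1 s) * c').
  { move=> s.
    set S' := Sk x k.+1 s.
    set C := S' / INR k - S' / INR k.+1.
    set y := fun j : 'I_N => C - (x (s j) - mu) / INR k.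
    have e1 : forall j, P j -> exp (lambda * INR n / INR k * Sk x k (tperm j kk * s)%g)
        = exp (lambda * INR n / INR k.+1 * S') * exp ((lambda * INR n) * y j).
      move=> j Pj; rewrite (@Sk_swap N x k kk j s erefl Pj) -exp_plus /y /C /S'.
      f_equal; rewrite -/mu Hk1; field; lra.
    rewrite (eq_bigr _ e1) -sumR_scal.
    have Hsy : \big[Rplus/0]_(j < N | P j) y j = 0.
      have ey : forall j, P j -> y j = C + (- / INR k) * (x (s j) - mu).
        move=> j _; rewrite /y; field; lra.
      rewrite (eq_bigr _ ey) sumR_add sum_ord_lt // -sumR_scal.
      have -> : \big[Rplus/0]_(j < N | P j) (x (s j) - mu) = S' by [].
      rewrite /C Hk1; field; lra.
    have Hyb : forall j, P j -> C - (b - mu) / INR k <= y j <= C - (a - mu) / INR k.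
      move=> j _; have := hx (s j) => hxj; rewrite /y; split;
        apply: Rplus_le_compat_l; apply: Ropp_le_contravar; apply: Rmult_le_compat_r;
        try (left; apply: Rinv_0_lt_compat; lra); lra.
    have Hs := @sign_bounds _ P y _ _ kk (ltnSn k) Hyb Hsy.
    have := @hoef_disc _ P y _ _ (lambda * INR n) Hs Hyb Hsy.
    rewrite sum_ord_lt // Rmult_1_r => H.
    have eq : (lambda * INR n) ^ 2 * (C - (a - mu) / INR k - (C - (b - mu) / INR k)) ^ 2 / 8
      = lambda ^ 2 * (b - a) ^ 2 / 8 * (INR n ^ 2 / INR k ^ 2).
      field; lra.
    rewrite eq in H.
    rewrite -/c' in H.
    have := exp_pos (lambda * INR n / INR k.+1 * S').
    nra. }
  have reid : forall j : 'I_N, Ek n x lambda k =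
      \big[Rplus/0]_(s : 'S_N) exp (lambda * INR n / INR k * Sk x k (tperm j kk * s)%g).
    move=> j; rewrite /Ek (reindex_inj (mulgI (tperm j kk))) //.
  have Hk1p : 0 < INR k.+1 by rewrite Hk1; lra.
  apply: (Rmult_le_reg_l (INR k.+1)) => //.
  rewrite -[X in X <= _](@sum_ord_lt N k.+1 (Ek n x lambda k) hkN).
  rewrite (eq_bigr _ (fun j _ => reid j)) exchange_big /=.
  apply: (Rle_trans _ (\big[Rplus/0]_(s : 'S_N)
      (INR k.+1 * (exp (lambda * INR n / INR k.+1 * Sk x k.+1 s) * c')))).
    apply: sumR_le => s _; exact: key s.
  apply: Req_le. rewrite -sumR_scal /Ek. f_equal.
  rewrite [X in _ = X]Rmult_comm sumR_scal. apply: eq_bigr => s _; ring.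
Qed.

Lemma base (N n : nat) (x : 'I_N -> R) (lambda : R) : (0 < N)%coq_nat ->
  Ek n x lambda N = INR #|{perm 'I_N}|.
Proof.
  move=> hN.
  have HN : 0 < INR N by apply: lt_0_INR.
  have H0 : forall s : 'S_N, Sk x N s = 0.
    move=> s; rewrite /Sk (eq_bigl (fun _ => true)); last by move=> t; exact: ltn_ord t.
    rewrite /Rminus sumR_add sum_const card_ord.
    rewrite (reindex_inj (@perm_inj _ (s^-1)%g)) /=.
    under eq_bigr => j _ do rewrite permKV.
    rewrite /pop_mean.
    transitivity (\big[Rplus/0]_(i < N) x i + INR N * - (\big[Rplus/0]_(i < N) x i / INR N)); last by field; lra.
    by f_equal.
  rewrite /Ek (eq_bigr (fun _ => 1)); first by rewrite sum_const Rmult_1_r.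
  by move=> s _; rewrite H0 Rmult_0_r exp_0.
Qed.

Lemma ln_le' u v : 0 < u -> u <= v -> ln u <= ln v.
Proof. move=> hu [h|->]; [left; exact: ln_increasing | lra]. Qed.

Lemma iter_bound (N n : nat) (x : 'I_N -> R) (a b lambda : R) :
  (forall i, a <= x i <= b) -> leq 1 n -> leq n N ->
  forall d, leq d (subn N n) ->
  Ek n x lambda (subn N d) <= INR #|{perm 'I_N}| *
    exp (lambda ^ 2 * (b - a) ^ 2 / 8 * (INR n * (INR n + 1)) * (1 / INR (subn N d) - 1 / INR N)).
Proof.
  move=> hx hn hnN; elim=> [|d IH] hd.
    rewrite subn0 base; last by apply/ltP; exact: leq_trans hn hnN.
    have -> : 1 / INR N - 1 / INR N = 0 by ring.
    rewrite Rmult_0_r exp_0; lra.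
  set k := subn N d.+1.
  have ek : subn N d = k.+1 by rewrite /k; lia.
  have hnk : leq n k by rewrite /k; lia.
  have hkN : ltn k N by rewrite /k /ltn /=; lia.
  have IH' := IH (ltnW hd). rewrite ek in IH'.
  have st := @step N n x a b lambda k hx hn hnk hkN.
  set c := lambda ^ 2 * (b - a) ^ 2 / 8.
  have hc : 0 <= c by rewrite /c; have := pow2_ge_0 lambda; have := pow2_ge_0 (b - a); nra.
  have hnn : 1 <= INR n by apply: (le_INR 1); apply/leP.
  have hkn : INR n <= INR k by apply: le_INR; apply/leP.
  have hNp : 0 < INR N by apply: lt_0_INR; apply/ltP; exact: leq_ltn_trans hkN.
  rewrite S_INR in IH'.
  apply: (Rle_trans _ _ _ st).
  apply: (Rle_trans _ (INR #|{perm 'I_N}| * exp (c * (INR n * (INR n + 1)) * (1 / (INR k + 1) - 1 / INR N))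
     * exp (c * (INR n ^ 2 / INR k ^ 2)))).
    apply: Rmult_le_compat_r; [left; exact: exp_pos | exact: IH'].
  rewrite Rmult_assoc -exp_plus.
  apply: Rmult_le_compat_l; first exact: pos_INR.
  apply: exp_le'.
  have key : INR n ^ 2 / INR k ^ 2 <= INR n * (INR n + 1) * (1 / INR k - 1 / (INR k + 1)).
    have -> : INR n * (INR n + 1) * (1 / INR k - 1 / (INR k + 1)) =
      INR n ^ 2 / INR k ^ 2 + INR n * (INR k - INR n) / (INR k ^ 2 * (INR k + 1)).
      field; lra.
    have : 0 <= INR n * (INR k - INR n) / (INR k ^ 2 * (INR k + 1)).
      apply: Rmult_le_pos; first nra.
      left; apply: Rinv_0_lt_compat; nra.
    lra.
  have := Rmult_le_compat_l c _ _ hc key.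
  move=> h.
  have -> : c * (INR n * (INR n + 1)) * (1 / INR k - 1 / INR N) =
    c * (INR n * (INR n + 1)) * (1 / (INR k + 1) - 1 / INR N) +
    c * (INR n * (INR n + 1) * (1 / INR k - 1 / (INR k + 1))).
    field; lra.
  lra.
Qed.

Theorem proposition4 (N n : nat) (hN : leq 2 N)
  (hn1 : leq 1 n) (hn2 : leq n (subn N 1))
  (x : 'I_N -> R) (a b : R)
  (ha : forall i, a <= x i) (ha' : exists i, x i = a)
  (hb : forall i, x i <= b) (hb' : exists i, x i = b)
  (lambda : R) (hl : 0 < lambda) :
  ln (Eperm (fun s : 'S_N => exp (lambda * nZ n x s)))
  <= (b - a) ^ 2 / 8 * lambda ^ 2 * INR (addn n 1) * (1 - INR n / INR N).
Proof.
  have hx : forall i, a <= x i <= b by move=> i; split; [exact: ha | exact: hb].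
  have hnN : leq n N by apply: leq_trans hn2 (leq_subr _ _).
  have H := @iter_bound N n x a b lambda hx hn1 hnN (subn N n) (leqnn _).
  rewrite subKn // in H.
  have hnp : 0 < INR n by apply: lt_0_INR; apply/ltP.
  have hNp : 0 < INR N by apply: lt_0_INR; apply/ltP; exact: leq_trans hn1 hnN.
  have hcard : 0 < INR #|{perm 'I_N}|.
    apply: lt_0_INR; apply/ltP; rewrite card_Sn; exact: fact_gt0.
  have eE : Eperm (fun s : 'S_N => exp (lambda * nZ n x s)) = Ek n x lambda n / INR #|{perm 'I_N}|.
    rewrite /Eperm /Ek; f_equal; apply: eq_bigr => s _; f_equal.
    rewrite /nZ /Sk; field; lra.
  have hE : 0 < Ek n x lambda n.
    rewrite /Ek; apply: (@sumR_gt0 _ predT _ 1%g) => // [s _|]; [left|]; exact: exp_pos.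
  rewrite eE.
  set T := lambda ^ 2 * (b - a) ^ 2 / 8 * (INR n * (INR n + 1)) * (1 / INR n - 1 / INR N).
  have -> : (b - a) ^ 2 / 8 * lambda ^ 2 * INR (addn n 1) * (1 - INR n / INR N) = T.
    rewrite addn1 S_INR /T; field; lra.
  rewrite -(ln_exp T).
  apply: ln_le'.
    apply: Rdiv_lt_0_compat => //.
  apply: (Rmult_le_reg_r (INR #|{perm 'I_N}|)) => //.
  rewrite /Rdiv Rmult_assoc Rinv_l; last lra.
  rewrite Rmult_1_r Rmult_comm; exact: H.
Qed.
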